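(* Fix any total budget $\mathrm{TB}\in\mathbb N_0$. If the integers satisfy $n>m$, then the integer game forms satisfy $(n)>(m)$.
   Context: Game forms are defined recursively: $G=\{G^{\mathcal L}\mid G^{\mathcal R}\}$ with finite sets of Left and Right options, and finite birthday. Integer game forms: $(0)=\{\varnothing\mid\varnothing\}$; for $n\in\mathbb N$, $(n)=\{(n-1)\mid\varnothing\}$ and $(-n)=\overline{(n)}=\{\varnothing\mid(-(n-1))\}$, where the conjugate is $\bar G=\{\overline{G^{\mathcal R}}\mid\overline{G^{\mathcal L}}\}$. The budget set for total budget $\mathrm{TB}$ is $\mathcal B=\{0,\dots,\mathrm{TB},\hat 0,\dots,\widehat{\mathrm{TB}}\}$: state $p$ (resp. $\hat p$) means Left holds $p$ dollars and Right holds $\mathrm{TB}-p$, and Right (resp. Left) holds the tie-breaking marker. Play of $(G,\tilde p)$: at every position (terminal ones included) both players bid simultaneously, Left $\ell\in\{0,\dots,p\}$, Right $r\in\{0,\dots,\mathrm{TB}-p\}$. If Left holds the marker (state $\hat p$): if $\ell>r$ Left moves to $(G^L,\widehat{p-\ell})$, or, including the marker (allowed when $\ell\ge r$), to $(G^L,p-\ell)$; if $\ell=r$ Left wins, the marker passes to Right, play continues at $(G^L,p-\ell)$; if $\ell<r$ Right moves to $(G^R,\widehat{p+r})$. Symmetrically when Right holds the marker (state $p$): if $r>\ell$ Right moves to $(G^R,p+r)$ or, including the marker, to $(G^R,\widehat{p+r})$; if $r=\ell$ Right wins, the marker passes to Left, play continues at $(G^R,\widehat{p+r})$; if $r<\ell$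 Left moves to $(G^L,p-\ell)$. A player who wins a bid but has no option loses. $o(G,\tilde p)\in\{\mathrm L,\mathrm R\}$ is the winner under optimal play; $\mathrm L>\mathrm R$. Disjunctive sum $G+H=\{G^{\mathcal L}+H,G+H^{\mathcal L}\mid G^{\mathcal R}+H,G+H^{\mathcal R}\}$. $G\ge H$ means $o(G+X,\tilde p)\ge o(H+X,\tilde p)$ for all game forms $X$ and all $\tilde p\in\mathcal B$; $G>H$ means $G\ge H$ and not $H\ge G$. *)

(* Defs.v *)
From mathcomp Require Import all_boot all_order all_algebra.
Set Implicit Arguments. Unset Strict Implicit. Unset Printing Implicit Defensive.

(* Game forms: finite lists of Left and Right options; finite birthday is
   automatic since the type is inductive (well-founded). *)
Inductive game : Type := Game of seq game & seq game.

Definition leftopts (G : game) : seq game := let: Game L _ := G in L.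
Definition rightopts (G : game) : seq game := let: Game _ R := G in R.

Fixpoint conjg (G : game) : game :=
  match G with Game L R => Game (map conjg R) (map conjg L) end.

(* Integer game forms: (0) = {|}, (n) = {(n-1) |}, (-n) = conj (n). *)
Fixpoint natg (n : nat) : game :=
  match n with
  | 0 => Game [::] [::]
  | k.+1 => Game [:: natg k] [::]
  end.

Definition intg (z : int) : game :=
  match z with
  | Posz n => natg n
  | Negz n => conjg (natg n.+1)
  end.

(* Disjunctive sum G + H = {G^L + H, G + H^L | G^R + H, G + H^R} *)
Fixpoint gadd (G H : game) {struct G} : game :=
  match G with
  | Game GL GR =>
    let fix addH (H : game) : game :=
      match H with
      | Game HL HR =>
        Game (map (fun g => gadd g H) GL ++ map addH HL)
             (map (fun g => gadd g H) GR ++ map addH HR)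
      end in addH H
  end.

(* The budget state is
   (p, hat) with p = Left's money (Right holds TB - p); hat = true means
   the state \hat p (Left holds the tie-breaking marker), hat = false means
   the state p (Right holds the marker).  Result true = Left wins (L),
   false = Right wins (R).  Left wins iff she has a bid l in {0..p} such that
   for every Right bid r in {0..TB-p}, she wins the resulting continuation
   (the bid winner then chooses the option, and, where allowed, whether to
   pass the marker). A player who wins the bid but has no option loses. *)
Fixpoint outcome (TB : nat) (G : game) (p : nat) (hat : bool) {struct G} : bool :=
  match G with
  | Game GL GR =>
    let leftmv (p' : nat) (hs : seq bool) :=
        has (fun g => has (fun h => outcome TB g p' h) hs) GL in
    let rightmv (p' : nat) (hs : seq bool) :=
        all (fun g => all (fun h => outcome TB g p' h) hs) GR in
    has (fun l =>
      all (fun r =>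
        if hat then
          if r < l then leftmv (p - l) [:: true; false]
          else if l == r then leftmv (p - l) [:: false]
          else rightmv (p + r) [:: true]
        else
          if l < r then rightmv (p + r) [:: false; true]
          else if l == r then rightmv (p + r) [:: true]
          else leftmv (p - l) [:: false])
        (iota 0 (TB - p).+1))
      (iota 0 p.+1)
  end.

Definition game_ge (TB : nat) (G H : game) : Prop :=
  forall (X : game) (p : nat) (hat : bool), p <= TB ->
    outcome TB (gadd H X) p hat -> outcome TB (gadd G X) p hat.

Definition game_gt (TB : nat) (G H : game) : Prop :=
  game_ge TB G H /\ ~ game_ge TB H G.

(* Main.v *)
Require Import Defs.
From mathcomp Require Import all_boot all_order all_algebra.
From mathcomp Require Import zify.
Import Order.TTheory GRing.Theory Num.Theory.
Set Implicit Arguments. Unset Strict Implicit. Unset Printing Implicit Defensive.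


Fixpoint game_ind' (P : game -> Prop)
  (f : forall L R, (forall g, List.In g L -> P g) -> (forall g, List.In g R -> P g) -> P (Game L R))
  (G : game) {struct G} : P G :=
  match G with
  | Game L R =>
    let fix go (l : seq game) : forall g, List.In g l -> P g :=
      match l return forall g, List.In g l -> P g with
      | nil => fun g (H : List.In g nil) => False_ind _ H
      | x :: xs => fun g (H : List.In g (x :: xs)) =>
          match H with
          | or_introl e => eq_ind x P (@game_ind' P f x) g e
          | or_intror H' => go xs g H'
          end
      end in
    f L R (go L) (go R)
  end.

Lemma In_cat (T : Type) (x : T) s1 s2 : List.In x (s1 ++ s2) <-> List.In x s1 \/ List.In x s2.
Proof. elim: s1 => [|y s IH] /=; [tauto|]. rewrite IH; tauto. Qed.

Lemma In_map (T U : Type) (f : T -> U) y s : List.In y (map f s) <-> exists x, List.In x s /\ y = f x.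
Proof.
elim: s => [|x s IH] /=; first by split => // -[x []].
rewrite IH; split.
- case=> [<-|[z [Hz ->]]]; [by exists x; auto| by exists z; auto].
- case=> z [[<-|Hz] ->]; [by left| by right; exists z].
Qed.

Lemma hasIn (T : Type) (p : pred T) s : has p s -> exists x, List.In x s /\ p x.
Proof.
elim: s => [|x s IH] //= /orP [H|/IH [y [Hy Hp]]]; [by exists x; auto | by exists y; auto].
Qed.

Lemma Inhas (T : Type) (p : pred T) s x : List.In x s -> p x -> has p s.
Proof. elim: s => [|y s IH] //= [->->//|H Hp]. by rewrite IH ?orbT. Qed.

Lemma allIn (T : Type) (p : pred T) s : (forall x, List.In x s -> p x) -> all p s.
Proof. elim: s => [|y s IH] //= H. by rewrite H /= ?IH //; auto. Qed.

Lemma Inall (T : Type) (p : pred T) s x : all p s -> List.In x s -> p x.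
Proof. elim: s => [|y s IH] //= /andP [H1 H2] [<-//|]; exact: IH. Qed.

Definition step (TB : nat) (o : game -> nat -> bool -> bool) (GL GR : seq game) (p : nat) (hat : bool) : bool :=
    let leftmv (p' : nat) (hs : seq bool) :=
        has (fun g => has (fun h => o g p' h) hs) GL in
    let rightmv (p' : nat) (hs : seq bool) :=
        all (fun g => all (fun h => o g p' h) hs) GR in
    has (fun l =>
      all (fun r =>
        if hat then
          if r < l then leftmv (p - l) [:: true; false]
          else if l == r then leftmv (p - l) [:: false]
          else rightmv (p + r) [:: true]
        else
          if l < r then rightmv (p + r) [:: false; true]
          else if l == r then rightmv (p + r) [:: true]
          else leftmv (p - l) [:: false])
        (iota 0 (TB - p).+1))
      (iota 0 p.+1).

Lemma outcomeE TB G p hat : outcome TB G p hat = step TB (outcome TB) (leftopts G) (rightopts G) p hat.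
Proof. by case: G. Qed.

Lemma step_mono TB o o' GL GR GL' GR' p hat :
  (forall p' hs, has (fun g => has (fun h => o' g p' h) hs) GL' -> has (fun g => has (fun h => o g p' h) hs) GL) ->
  (forall p' hs, all (fun g => all (fun h => o' g p' h) hs) GR' -> all (fun g => all (fun h => o g p' h) hs) GR) ->
  step TB o' GL' GR' p hat -> step TB o GL GR p hat.
Proof.
move=> HL HR; apply: sub_has => l; apply: sub_all => r.
by case: hat; case: ifP => _; try case: ifP => _; auto.
Qed.

Lemma sim TB (S : game -> game -> Prop)
  (HL : forall A B, S A B -> forall b, List.In b (leftopts B) -> exists a, List.In a (leftopts A) /\ S a b)
  (HR : forall A B, S A B -> forall a, List.In a (rightopts A) -> exists b, List.In b (rightopts B) /\ S a b) :
  forall A B, S A B -> forall p h, outcome TB B p h -> outcome TB A p h.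
Proof.
elim/game_ind' => L R IHL IHR B HS p h.
rewrite !outcomeE; apply: step_mono => p' hs.
- move/hasIn => [b [Hb /hasIn [h' [Hh' Ho]]]].
  have [a [Ha Sab]] := HL _ _ HS b Hb.
  apply: (Inhas Ha); apply: (Inhas Hh'); exact: IHL Sab _ _ Ho.
- move=> Hall; apply: allIn => a Ha.
  have [b [Hb Sab]] := HR _ _ HS a Ha.
  apply: allIn => h' Hh'.
  apply: IHR Ha _ Sab _ _ _.
  have := Inall Hall Hb. move=> H1. exact: (Inall H1 Hh').
Qed.

Lemma leftopts_gadd G X : leftopts (gadd G X) = map (fun g => gadd g X) (leftopts G) ++ map (gadd G) (leftopts X).
Proof. by case: G; case: X. Qed.

Lemma rightopts_gadd G X : rightopts (gadd G X) = map (fun g => gadd g X) (rightopts G) ++ map (gadd G) (rightopts X).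
Proof. by case: G; case: X. Qed.



Section Race.
Variable TB : nat.
Variable F : nat -> nat -> game.
Hypothesis HFL : forall a b, leftopts (F a b) = if a is a'.+1 then [:: F a' b] else [::].
Hypothesis HFR : forall a b, rightopts (F a b) = if b is b'.+1 then [:: F a b'] else [::].

Lemma race_win : forall n a b p hat, a + b <= n -> (b < a) || ((b <= a) && ~~ hat) ->
  outcome TB (F a b) p hat.
Proof.
elim=> [|n IH] a b p hat Hn Hc; rewrite outcomeE HFL HFR /step;
  (apply/hasP; exists 0; [by rewrite mem_iota | apply/allP => r _]).
- case: a b Hn Hc => [|a] [|b] //= Hn Hc; try lia.
  by case: hat Hc => //= _; case: r.
- case: hat Hc => /= Hc; rewrite ?ltn0; case: a Hn Hc => [|a] Hn Hc; case: b Hn Hc => [|b] Hn Hc;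
  repeat case: ifP => ? ; rewrite /= ?IH ?orbT ?andbT //; lia.
Qed.

Lemma race_lose : forall n a b p hat, a + b <= n -> ((a <= b) && hat) || ((a < b) && ~~ hat) ->
  outcome TB (F a b) p hat = false.
Proof.
elim=> [|n IH] a b p hat Hn Hc; rewrite outcomeE HFL HFR /step;
  apply/negbTE; rewrite -all_predC; apply/allP => l Hl; apply/negP => /allP Hall.
all: have Hr : (if hat && (l <= TB - p) then l else 0) \in iota 0 (TB - p).+1 by
   (rewrite mem_iota; case: hat {Hall} Hc => //= Hc; case: (leqP l (TB - p)) => //= Hlt; lia).
all: move: (Hall _ Hr); clear Hall Hr.
- case: a b Hn Hc => [|a] [|b] //= Hn Hc; try lia.
  case: hat Hc => //= _; case: (leqP l (TB - p)) => Hlt /=; rewrite ?ltnn ?eqxx //.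
  by have -> : 0 < l by lia.
- case: hat Hc => /= Hc; case: a Hn Hc => [|a] Hn Hc; case: b Hn Hc => [|b] Hn Hc;
  try case: (leqP l (TB - p)) => Hlt /=;
  repeat case: ifP => ? ; rewrite /= ?IH ?orbF ?andbF //; lia.
Qed.
End Race.

Local Open Scope ring_scope.

Lemma intg_opp_nat (k : nat) : intg (- (k%:Z)) = Defs.conjg (natg k).
Proof. case: k => [|k]; first by rewrite oppr0. by rewrite -NegzE. Qed.

Lemma lo_intg z g : List.In g (leftopts (intg z)) <-> 0 < z /\ g = intg (z - 1).
Proof.
case: z => [[|k]|k].
- by split => // -[].
- have -> : (k.+1%:Z - 1 = k%:Z) by rewrite -addn1 PoszD addrK.
  rewrite /=; by split => [[<-|]|[_ ->]]; auto.
- by split => // -[].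
Qed.

Lemma ro_intg z g : List.In g (rightopts (intg z)) <-> z < 0 /\ g = intg (z + 1).
Proof.
case: z => [[|k]|k].
- by split => // -[].
- by split => // -[].
- have -> : (Negz k + 1 = - (k%:Z)) by rewrite NegzE -addn1 PoszD opprD addrNK.
  rewrite intg_opp_nat /=.
  by split => [[<-|]|[_ ->]]; auto.
Qed.

Definition Srel (A B : game) : Prop :=
  exists a b X, b <= a /\ A = gadd (intg a) X /\ B = gadd (intg b) X.

Lemma ge_int TB (a b : int) : b <= a -> game_ge TB (intg a) (intg b).
Proof.
move=> Hab X p hat _.
apply: (@sim TB Srel); last by exists a, b, X.
- move=> A B [a' [b' [Y [Hle [-> ->]]]]] g.
  rewrite leftopts_gadd In_cat !In_map => -[[g' [/lo_intg [Hb ->] ->]]|[y [Hy ->]]].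
  + exists (gadd (intg (a' - 1)) Y); split.
      rewrite leftopts_gadd In_cat !In_map; left; exists (intg (a' - 1)); split => //.
      apply/lo_intg; split => //; exact: lt_le_trans Hb Hle.
    by exists (a' - 1), (b' - 1), Y; rewrite lerD2r.
  + exists (gadd (intg a') y); split.
      by rewrite leftopts_gadd In_cat !In_map; right; exists y.
    by exists a', b', y.
- move=> A B [a' [b' [Y [Hle [-> ->]]]]] g.
  rewrite rightopts_gadd In_cat !In_map => -[[g' [/ro_intg [Hb ->] ->]]|[y [Hy ->]]].
  + exists (gadd (intg (b' + 1)) Y); split.
      rewrite rightopts_gadd In_cat !In_map; left; exists (intg (b' + 1)); split => //.
      apply/ro_intg; split => //; exact: le_lt_trans Hle Hb.
    by exists (a' + 1), (b' + 1), Y; rewrite lerD2r.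
  + exists (gadd (intg b') y); split.
      by rewrite rightopts_gadd In_cat !In_map; right; exists y.
    by exists a', b', y.
Qed.

Definition F1 (a b : nat) : game := gadd (natg a) (Defs.conjg (natg b)).
Definition F2 (a b : nat) : game := gadd (Defs.conjg (natg b)) (natg a).

Lemma F1L a b : leftopts (F1 a b) = if a is a'.+1 then [:: F1 a' b] else [::].
Proof. by rewrite /F1 leftopts_gadd; case: a; case: b. Qed.
Lemma F1R a b : rightopts (F1 a b) = if b is b'.+1 then [:: F1 a b'] else [::].
Proof. by rewrite /F1 rightopts_gadd; case: a; case: b. Qed.
Lemma F2L a b : leftopts (F2 a b) = if a is a'.+1 then [:: F2 a' b] else [::].
Proof. by rewrite /F2 leftopts_gadd; case: a; case: b. Qed.
Lemma F2R a b : rightopts (F2 a b) = if b is b'.+1 then [:: F2 a b'] else [::].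
Proof. by rewrite /F2 rightopts_gadd; case: a; case: b. Qed.

Lemma witness TB (m : int) : exists X hat,
  outcome TB (gadd (intg (m + 1)) X) 0 hat /\ outcome TB (gadd (intg m) X) 0 hat = false.
Proof.
case: m => [k|k].
- have -> : (Posz k + 1 = Posz k.+1) by rewrite -addn1 PoszD.
  exists (Defs.conjg (natg k)), true; split.
  + change (outcome TB (F1 k.+1 k) 0 true); apply: (@race_win TB F1 F1L F1R (k.+1 + k)%N k.+1 k 0 true) => //; lia.
  + change (outcome TB (F1 k k) 0 true = false); apply: (@race_lose TB F1 F1L F1R (k + k)%N k k 0 true) => //; lia.
- have -> : (Negz k + 1 = - (k%:Z)) by rewrite NegzE -addn1 PoszD opprD addrNK.
  rewrite intg_opp_nat.
  exists (natg k), false; split.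
  + change (outcome TB (F2 k k) 0 false); apply: (@race_win TB F2 F2L F2R (k + k)%N k k 0 false) => //; lia.
  + change (outcome TB (F2 k k.+1) 0 false = false); apply: (@race_lose TB F2 F2L F2R (k + k.+1)%N k k.+1 0 false) => //; lia.
Qed.

Theorem mainTheorem15 (TB : nat) (n m : int) :
  m < n -> game_gt TB (intg n) (intg m).
Proof.
move=> Hmn; split; first exact: ge_int (ltW Hmn).
move=> Hge.
have [X [hat [H1 H2]]] := witness TB m.
have H3 : outcome TB (gadd (intg n) X) 0 hat.
  apply: (ge_int (a := n) (b := m + 1)) => //; by rewrite lezD1.
by rewrite (Hge X 0 hat (leq0n _) H3) in H2.
Qed.
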